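(* There is an absolute constant $C>0$ such that the following holds. Let $\varepsilon\in(0,1)$, let $f:\mathbb R\to\mathbb R$ be $1$-smooth with $f\ge0$, and let $x_0\in\mathbb R$ satisfy $f(x_0)\le1$ and $f'(x_0)\le-\varepsilon$. Then DecreaseGap$(x_0)$ terminates using at most $C(1+\log(1/\varepsilon))$ oracle queries, and either it returns (''stationary'', $z$) where $z$ is an $\varepsilon$-stationary point of $f$, or it returns (''base'', $x$) where $f(x)\le f(x_0)$, $f'(x)\le-\varepsilon$ and $f(x+2/\varepsilon)\ge\frac34 f(x)$.
   Context: $f:\mathbb R\to\mathbb R$ is $1$-smooth if it is continuously differentiable and $f'$ is $1$-Lipschitz; $x$ is an $\varepsilon$-stationary point if $|f'(x)|<\varepsilon$. The oracle returns $(f(x),f'(x))$ on query $x$; values at already-queried points are reused. Subroutines (a recursive call's output is returned unchanged): BinarySearch$(x_0,x_1)$: $m=(x_0+x_1)/2$; if $|f'(m)|<\varepsilon$ return $m$; if $f'(m)\le-\varepsilon$ return BinarySearch$(m,x_1)$; if $f'(m)>0$ return BinarySearch$(x_0,m)$. DecreaseGap$(x_0)$: let $y=x_0+2/\varepsilon$; if $|f'(y)|<\varepsilon$ return (''stationary'', $y$); else if $f'(y)>0$ return (''stationary'', BinarySearch$(x_0,y)$); else if $f(y)\ge\frac34 f(x_0)$ return (''base'', $x_0$); else return DecreaseGap$(y)$. *)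

(* Defs.v *)
From Stdlib Require Import Reals Lra List.
Open Scope R_scope.

Definition one_smooth (f f' : R -> R) : Prop :=
  (forall x, derivable_pt_lim f x (f' x)) /\
  (forall x y, Rabs (f' x - f' y) <= Rabs (x - y)).

Inductive outcome : Type :=
| OStationary (z : R)
| OBase (x : R).

(* Big-step semantics of BinarySearch(x0,x1) for oracle (f, f') and eps.
   [BinSearch f' eps x0 x1 qs z]: the call terminates, returns z, and the
   list qs records (in order) the points queried to the oracle. *)
Inductive BinSearch (f' : R -> R) (eps : R) : R -> R -> list R -> R -> Prop :=
| BS_stat : forall x0 x1,
    Rabs (f' ((x0 + x1) / 2)) < eps ->
    BinSearch f' eps x0 x1 ((x0 + x1) / 2 :: nil) ((x0 + x1) / 2)
| BS_right : forall x0 x1 qs z,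
    ~ (Rabs (f' ((x0 + x1) / 2)) < eps) ->
    f' ((x0 + x1) / 2) <= - eps ->
    BinSearch f' eps ((x0 + x1) / 2) x1 qs z ->
    BinSearch f' eps x0 x1 ((x0 + x1) / 2 :: qs) z
| BS_left : forall x0 x1 qs z,
    ~ (Rabs (f' ((x0 + x1) / 2)) < eps) ->
    ~ (f' ((x0 + x1) / 2) <= - eps) ->
    f' ((x0 + x1) / 2) > 0 ->
    BinSearch f' eps x0 ((x0 + x1) / 2) qs z ->
    BinSearch f' eps x0 x1 ((x0 + x1) / 2 :: qs) z.

(* Big-step semantics of DecreaseGap(x0); x0 itself is queried (its value
   f(x0) is used), y = x0 + 2/eps is queried. *)
Inductive DecreaseGap (f f' : R -> R) (eps : R) : R -> list R -> outcome -> Prop :=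
| DG_stat : forall x0,
    Rabs (f' (x0 + 2 / eps)) < eps ->
    DecreaseGap f f' eps x0 (x0 :: x0 + 2 / eps :: nil) (OStationary (x0 + 2 / eps))
| DG_bs : forall x0 qs z,
    ~ (Rabs (f' (x0 + 2 / eps)) < eps) ->
    f' (x0 + 2 / eps) > 0 ->
    BinSearch f' eps x0 (x0 + 2 / eps) qs z ->
    DecreaseGap f f' eps x0 (x0 :: x0 + 2 / eps :: qs) (OStationary z)
| DG_base : forall x0,
    ~ (Rabs (f' (x0 + 2 / eps)) < eps) ->
    ~ (f' (x0 + 2 / eps) > 0) ->
    f (x0 + 2 / eps) >= 3 / 4 * f x0 ->
    DecreaseGap f f' eps x0 (x0 :: x0 + 2 / eps :: nil) (OBase x0)
| DG_rec : forall x0 qs o,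
    ~ (Rabs (f' (x0 + 2 / eps)) < eps) ->
    ~ (f' (x0 + 2 / eps) > 0) ->
    ~ (f (x0 + 2 / eps) >= 3 / 4 * f x0) ->
    DecreaseGap f f' eps (x0 + 2 / eps) qs o ->
    DecreaseGap f f' eps x0 (x0 :: x0 + 2 / eps :: qs) o.

(* Number of oracle queries: values at already-queried points are reused,
   so count distinct queried points. *)
Definition num_queries (qs : list R) : nat := length (nodup Req_EM_T qs).

(* Main.v *)
Require Import Defs.
From Stdlib Require Import Reals Lra Lia List.
Open Scope R_scope.

Lemma ln_le' : forall x y, 0 < x -> x <= y -> ln x <= ln y.
Proof. intros x y Hx Hxy. destruct (Rle_lt_or_eq_dec _ _ Hxy) as [H|H].
  left; now apply ln_increasing. subst; lra. Qed.

Lemma ln2_lt1 : ln 2 < 1.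
Proof. rewrite <- (ln_exp 1). apply ln_increasing. lra.
  pose proof (exp_ineq1 1). lra. Qed.

Lemma ln34 : ln (3/4) <= - / 4.
Proof.
  assert (H0 : ln (3/4) < 0) by (rewrite <- ln_1; apply ln_increasing; lra).
  pose proof (exp_ineq1 (ln (3/4)) ltac:(lra)).
  rewrite exp_ln in H by lra. lra. Qed.

Lemma nodup_len : forall l : list R, (length (nodup Req_EM_T l) <= length l)%nat.
Proof. induction l as [|a l IH]; simpl. lia.
  destruct (in_dec Req_EM_T a l); simpl; lia. Qed.

Lemma pow_big : forall x b, 1 < x -> exists n : nat, b < x ^ n.
Proof. intros x b Hx. destruct (Pow_x_infinity x ltac:(rewrite Rabs_right; lra) (b+1)) as [N HN].
  exists N. specialize (HN N (le_n N)). rewrite Rabs_right in HN. lra.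
  apply Rle_ge, pow_le; lra. Qed.

Lemma bs_term (f' : R -> R) eps
  (Hlip : forall x y, Rabs (f' x - f' y) <= Rabs (x - y)) (He : 0 < eps) :
  forall n a b, a < b -> f' a <= - eps -> eps <= f' b -> b - a < 2 * eps * 2 ^ n ->
  exists qs z, BinSearch f' eps a b qs z /\ Rabs (f' z) < eps /\
    INR (length qs) <= 1 + (ln (b - a) - ln (2 * eps)) / ln 2.
Proof.
  pose proof ln_lt_2 as L2.
  induction n as [|n IH]; intros a b Hab Ha Hb Hn.
  - exfalso. specialize (Hlip b a). rewrite (Rabs_right (b - a)) in Hlip by lra.
    pose proof (Rle_abs (f' b - f' a)). simpl in Hn. lra.
  - assert (Hgap : 2 * eps <= b - a).
    { specialize (Hlip b a). rewrite (Rabs_right (b - a)) in Hlip by lra.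
      pose proof (Rle_abs (f' b - f' a)). lra. }
    assert (Hln0 : 0 <= ln (b - a) - ln (2 * eps)).
    { pose proof (ln_le' (2*eps) (b-a) ltac:(lra) Hgap). lra. }
    assert (Hhalf : ln ((b - a) / 2) = ln (b - a) - ln 2).
    { unfold Rdiv. rewrite ln_mult, ln_Rinv; lra. }
    set (m := (a + b) / 2).
    destruct (Rlt_dec (Rabs (f' m)) eps) as [Hs|Hs].
    + exists (m :: nil), m. split. constructor; auto. split; auto.
      simpl. assert (0 <= (ln (b - a) - ln (2 * eps)) / ln 2)
        by (apply Rmult_le_pos; [lra| left; apply Rinv_0_lt_compat; lra]). lra.
    + destruct (Rle_dec (f' m) (- eps)) as [Hl|Hl].
      * assert (Hm1 : a < m < b) by (unfold m; lra).
        assert (Hm2 : b - m = (b - a) / 2) by (unfold m; field).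
        destruct (IH m b) as [qs [z [H1 [H2 H3]]]]; try lra.
        rewrite Hm2. simpl in Hn; lra.
        exists (m :: qs), z. split. apply BS_right; auto. split; auto.
        simpl length. rewrite S_INR.
        rewrite Hm2 in H3.
        rewrite Hhalf in H3.
        replace ((ln (b - a) - ln 2 - ln (2 * eps)) / ln 2)
          with ((ln (b - a) - ln (2 * eps)) / ln 2 - 1) in H3 by (field; lra). lra.
      * assert (Hp : eps <= f' m).
        { destruct (Rle_dec 0 (f' m)).
          rewrite Rabs_right in Hs; lra. rewrite Rabs_left in Hs; lra. }
        assert (Hm1 : a < m < b) by (unfold m; lra).
        assert (Hm2 : m - a = (b - a) / 2) by (unfold m; field).
        destruct (IH a m) as [qs [z [H1 [H2 H3]]]]; try lra.
        rewrite Hm2. simpl in Hn; lra.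
        exists (m :: qs), z. split. apply BS_left; [exact Hs|exact Hl|unfold m in *; lra|exact H1]. split; auto.
        simpl length. rewrite S_INR.
        rewrite Hm2 in H3.
        rewrite Hhalf in H3.
        replace ((ln (b - a) - ln 2 - ln (2 * eps)) / ln 2)
          with ((ln (b - a) - ln (2 * eps)) / ln 2 - 1) in H3 by (field; lra). lra.
Qed.

Lemma lower (f f' : R -> R) eps (Hs : one_smooth f f') (Hf : forall x, 0 <= f x)
  (He : 0 < eps) : forall x, f' x <= - eps -> eps ^ 2 / 4 <= f x.
Proof.
  destruct Hs as [Hd Hlip]. intros x Hx.
  set (d := - f' x / 2).
  destruct (MVT_cor2 f f' x (x + d)) as [c [Hc1 Hc2]]. unfold d; lra.
  intros; apply Hd.
  specialize (Hlip c x). rewrite (Rabs_right (c - x)) in Hlip by lra.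
  pose proof (Rle_abs (f' c - f' x)).
  assert (f' c <= f' x + d) by lra.
  assert (f (x + d) - f x <= (f' x + d) * d).
  { rewrite Hc1. replace (x + d - x) with d by ring. apply Rmult_le_compat_r; unfold d in *; lra. }
  pose proof (Hf (x + d)).
  assert (eps ^ 2 <= f' x ^ 2) by nra.
  unfold d in *. nra.
Qed.

Lemma dg_term (f f' : R -> R) eps x0 (Hs : one_smooth f f') (Hf : forall x, 0 <= f x)
  (He : 0 < eps < 1) :
  forall n x, f' x <= - eps -> f x <= f x0 -> f x < eps ^ 2 / 4 * (4/3) ^ n ->
  exists qs o, DecreaseGap f f' eps x qs o /\
    INR (length qs) <= 3 + 4 * (- ln eps) + 8 * (ln (f x) - ln (eps ^ 2 / 4)) /\
    match o with
    | OStationary z => Rabs (f' z) < eps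
    | OBase x => f x <= f x0 /\ f' x <= - eps /\ f (x + 2 / eps) >= 3 / 4 * f x
    end.
Proof.
  pose proof ln_lt_2 as L2. pose proof ln34 as L34.
  pose proof (lower f f' eps Hs Hf ltac:(lra)) as Low.
  assert (Hc : 0 < eps ^ 2 / 4) by (simpl; nra).
  assert (HL : 0 <= - ln eps).
  { assert (ln eps < 0) by (rewrite <- ln_1; apply ln_increasing; lra). lra. }
  assert (Hlip := proj2 Hs).
  induction n as [|n IH]; intros x Hx Hx0 Hn.
  - exfalso. specialize (Low x Hx). simpl in Hn. lra.
  - pose proof (Low x Hx) as Lx.
    assert (Hln0 : 0 <= ln (f x) - ln (eps ^ 2 / 4)).
    { pose proof (ln_le' _ _ Hc Lx). lra. }
    set (y := x + 2 / eps).
    assert (Hh : 0 < 2 / eps) by (unfold Rdiv; apply Rmult_lt_0_compat; [lra| apply Rinv_0_lt_compat; lra]).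
    destruct (Rlt_dec (Rabs (f' y)) eps) as [Hst|Hst].
    + exists (x :: y :: nil), (OStationary y). split. constructor; auto.
      split; auto. simpl length. rewrite !S_INR, INR_0. lra.
    + destruct (Rgt_dec (f' y) 0) as [Hp|Hp].
      * assert (eps <= f' y) by (rewrite Rabs_right in Hst; lra).
        destruct (pow_big 2 ((2/eps) / (2 * eps)) ltac:(lra)) as [k Hk].
        assert (Hy2 : y - x = 2 / eps) by (unfold y; ring).
        destruct (bs_term f' eps Hlip ltac:(lra) k x y) as [qs [z [H1 [H2 H3]]]];
          try lra.
        { rewrite Hy2.
          apply (Rmult_lt_compat_l (2 * eps)) in Hk; [|lra].
          replace (2 * eps * (2 / eps / (2 * eps))) with (2 / eps) in Hk by (field; lra). lra. }
        exists (x :: y :: qs), (OStationary z). split. apply DG_bs; auto.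
        split; auto. simpl length. rewrite !S_INR.
        rewrite Hy2 in H3.
        assert (E : ln (2 / eps) - ln (2 * eps) = 2 * (- ln eps)).
        { unfold Rdiv. assert (0 < / eps) by (apply Rinv_0_lt_compat; lra).
          rewrite !ln_mult, ln_Rinv; lra. }
        rewrite E in H3.
        assert (2 * - ln eps / ln 2 <= 4 * - ln eps).
        { apply (Rmult_le_reg_r (ln 2)). lra. unfold Rdiv.
          rewrite Rmult_assoc, Rinv_l by lra. nra. }
        lra.
      * assert (Hy : f' y <= - eps).
        { destruct (Rle_dec 0 (f' y)).
          rewrite Rabs_right in Hst; lra. rewrite Rabs_left in Hst; lra. }
        destruct (Rge_dec (f y) (3 / 4 * f x)) as [Hb|Hb].
        -- exists (x :: y :: nil), (OBase x). split. apply DG_base; auto.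
           split. simpl length. rewrite !S_INR, INR_0. lra. auto.
        -- assert (Hyx : f y < 3 / 4 * f x) by lra.
           pose proof (Low y Hy) as Ly.
           destruct (IH y Hy) as [qs [o [H1 [H2 H3]]]].
           lra. simpl in Hn. lra.
           exists (x :: y :: qs), o. split. apply DG_rec; auto.
           split; auto. simpl length. rewrite !S_INR.
           assert (ln (f y) <= ln (3/4) + ln (f x)).
           { rewrite <- ln_mult by lra. apply ln_le'; lra. }
           lra.
Qed.

Theorem lemmaA7 :
  exists C : R, C > 0 /\
  forall (eps : R) (f f' : R -> R) (x0 : R),
    0 < eps < 1 ->
    one_smooth f f' ->
    (forall x, 0 <= f x) ->
    f x0 <= 1 ->
    f' x0 <= - eps ->
    exists (qs : list R) (o : outcome),
      DecreaseGap f f' eps x0 qs o /\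
      INR (num_queries qs) <= C * (1 + ln (1 / eps)) /\
      match o with
      | OStationary z => Rabs (f' z) < eps
      | OBase x => f x <= f x0 /\ f' x <= - eps /\ f (x + 2 / eps) >= 3 / 4 * f x
      end.
Proof.
  exists 20. split. lra.
  intros eps f f' x0 He Hs Hf H1 H2.
  assert (Hc : 0 < eps ^ 2 / 4) by (simpl; nra).
  pose proof (lower f f' eps Hs Hf ltac:(lra) x0 H2) as Lx.
  destruct (pow_big (4/3) (f x0 / (eps ^ 2 / 4)) ltac:(lra)) as [n Hn].
  destruct (dg_term f f' eps x0 Hs Hf He n x0 H2 (Rle_refl _)) as [qs [o [A [B C]]]].
  { apply (Rmult_lt_compat_l (eps ^ 2 / 4)) in Hn; [|lra].
    replace (eps ^ 2 / 4 * (f x0 / (eps ^ 2 / 4))) with (f x0) in Hn by (field; lra). lra. }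
  exists qs, o. split; auto. split; auto.
  unfold num_queries. pose proof (le_INR _ _ (nodup_len qs)).
  assert (E1 : ln (1 / eps) = - ln eps).
  { unfold Rdiv. rewrite Rmult_1_l, ln_Rinv; lra. }
  assert (E2 : ln (eps ^ 2 / 4) = 2 * ln eps - 2 * ln 2).
  { unfold Rdiv. simpl. rewrite Rmult_1_r.
    assert (0 < / 4) by (apply Rinv_0_lt_compat; lra).
    assert (0 < eps * eps) by nra.
    rewrite !ln_mult, ln_Rinv by lra.
    replace 4 with (2 * 2) by ring. rewrite ln_mult by lra. lra. }
  assert (ln (f x0) <= 0) by (rewrite <- ln_1; apply ln_le'; lra).
  pose proof ln2_lt1. pose proof ln_lt_2. lra.
Qed.
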